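(* Every connected $D$-regular graph $G=(V,E)$ which is curvature sharp at all vertices has constant Bakry-\'Emery curvature, i.e. there is $\mathcal K\in\mathbb R$ with $\mathcal K_\infty(x)=\mathcal K$ for all $x\in V$.
   Context: For $f:V\to\mathbb R$, $\Delta f(x)=\sum_{y\sim x}(f(y)-f(x))$, $2\Gamma(f,g)=\Delta(fg)-f\Delta g-g\Delta f$, $2\Gamma_2(f,g)=\Delta\Gamma(f,g)-\Gamma(f,\Delta g)-\Gamma(g,\Delta f)$. The Bakry-\'Emery curvature $\mathcal K_\infty(x)$ is the supremum of all $K\in\mathbb R$ with $\Gamma_2(f,f)(x)\ge K\Gamma(f,f)(x)$ for all $f$. For a $D$-regular graph, $\mathcal K_\infty(x)\le 2+\#_\Delta(x)/D$ where $\#_\Delta(x)$ is the number of triangles containing $x$; $x$ is curvature sharp if equality holds. *)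

(* Defs.v *)
From Stdlib Require Import Reals List Relations ClassicalDescription.
Open Scope R_scope.

(* A simple graph on an arbitrary (possibly infinite) vertex type V is given by
   its neighbour lists [nbr x]; this forces local finiteness. *)
Definition simple_graph {V : Type} (nbr : V -> list V) : Prop :=
  (forall x, NoDup (nbr x)) /\
  (forall x, ~ In x (nbr x)) /\
  (forall x y, In y (nbr x) <-> In x (nbr y)).

Definition adj {V : Type} (nbr : V -> list V) (x y : V) : Prop := In y (nbr x).

Definition regular {V : Type} (nbr : V -> list V) (D : nat) : Prop :=
  forall x, length (nbr x) = D.

Definition connected {V : Type} (nbr : V -> list V) : Prop :=
  forall x y, clos_refl_trans V (adj nbr) x y.

Definition lsum {V : Type} (l : list V) (g : V -> R) : R :=
  fold_right (fun y acc => g y + acc) 0 l.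

Definition Lap {V : Type} (nbr : V -> list V) (f : V -> R) (x : V) : R :=
  lsum (nbr x) (fun y => f y - f x).

Definition Gamma {V : Type} (nbr : V -> list V) (f g : V -> R) (x : V) : R :=
  / 2 * (Lap nbr (fun z => f z * g z) x - f x * Lap nbr g x - g x * Lap nbr f x).

Definition Gamma2 {V : Type} (nbr : V -> list V) (f g : V -> R) (x : V) : R :=
  / 2 * (Lap nbr (Gamma nbr f g) x
         - Gamma nbr f (Lap nbr g) x - Gamma nbr g (Lap nbr f) x).

Definition BE_curvature {V : Type} (nbr : V -> list V) (x : V) (K : R) : Prop :=
  is_lub (fun K' => forall f : V -> R, Gamma2 nbr f f x >= K' * Gamma nbr f f x) K.

(* number of triangles containing x: ordered pairs (y,z) of neighbours of x
   with y ~ z, divided by 2 *)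
Definition triangles {V : Type} (nbr : V -> list V) (x : V) : R :=
  / 2 * lsum (nbr x) (fun y => lsum (nbr x) (fun z =>
          if excluded_middle_informative (In z (nbr y)) then 1 else 0)).

Definition curvature_sharp {V : Type} (nbr : V -> list V) (D : nat) (x : V) : Prop :=
  BE_curvature nbr x (2 + triangles nbr x / INR D).

(* Main.v *)
Require Import Defs.
From Stdlib Require Import Reals List Lra Lia Relations ClassicalDescription Classical.
Open Scope R_scope.

Definition indR (P : Prop) : R := if excluded_middle_informative P then 1 else 0.
Lemma indR_t (P:Prop) : P -> indR P = 1.
Proof. intro H; unfold indR; destruct (excluded_middle_informative P); tauto. Qed.
Lemma indR_f (P:Prop) : ~P -> indR P = 0.
Proof. intro H; unfold indR; destruct (excluded_middle_informative P); tauto. Qed.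
Lemma indR_sym {V} (a b : V) : indR (a = b) = indR (b = a).
Proof. destruct (classic (a = b)). subst; auto.
 rewrite !indR_f; auto. Qed.

Lemma lsum_ext {V} (l : list V) (F G : V -> R) :
  (forall y, In y l -> F y = G y) -> lsum l F = lsum l G.
Proof. induction l; simpl; intros H; auto. rewrite H by auto. rewrite IHl; auto. Qed.
Lemma lsum_add {V} (l : list V) (F G : V -> R) :
  lsum l (fun w => F w + G w) = lsum l F + lsum l G.
Proof. induction l as [|u l IHl]; simpl; [ring| rewrite IHl; ring]. Qed.
Lemma lsum_sub {V} (l : list V) (F G : V -> R) :
  lsum l (fun w => F w - G w) = lsum l F - lsum l G.
Proof. induction l as [|u l IHl]; simpl; [ring| rewrite IHl; ring]. Qed.
Lemma lsum_scal {V} (l : list V) c (F : V -> R) :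
  lsum l (fun w => c * F w) = c * lsum l F.
Proof. induction l as [|u l IHl]; simpl; [ring| rewrite IHl; ring]. Qed.
Lemma lsum_const {V} (l : list V) c : lsum l (fun _ => c) = INR (length l) * c.
Proof. induction l; simpl lsum; [simpl; ring| rewrite IHl; simpl length; rewrite S_INR; ring]. Qed.
Lemma lsum_nonneg {V} (l : list V) F : (forall y, 0 <= F y) -> 0 <= lsum l F.
Proof. intro H; induction l; simpl; [lra|]. specialize (H a); lra. Qed.
Lemma lsum_bil {V} (l : list V) (a b c d : V -> R) t s :
  lsum l (fun w => (a w + t * b w) * (c w + s * d w)) =
  lsum l (fun w => a w * c w) + s * lsum l (fun w => a w * d w)
  + t * lsum l (fun w => b w * c w) + t * s * lsum l (fun w => b w * d w).
Proof. induction l as [|u l IHl]; simpl; [ring| rewrite IHl; ring]. Qed.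
Lemma lsum_swap {V W} (l1 : list V) (l2 : list W) (F : V -> W -> R) :
  lsum l1 (fun a => lsum l2 (fun b => F a b)) = lsum l2 (fun b => lsum l1 (fun a => F a b)).
Proof. induction l1; simpl.
 - induction l2; simpl; auto. rewrite <- IHl2; ring.
 - rewrite IHl1. rewrite <- lsum_add. auto. Qed.

Lemma lsum_ind_eq {V} (l : list V) z h : NoDup l ->
  lsum l (fun w => indR (w = z) * h w) = indR (In z l) * h z.
Proof. induction l; simpl; intros Hnd.
 - rewrite indR_f; auto; ring.
 - inversion Hnd; subst. rewrite IHl by auto.
   destruct (classic (a = z)).
   + subst. rewrite (indR_f (In z l)) by auto. rewrite !indR_t; auto. ring.
   + rewrite (indR_f (a = z)) by auto.
     destruct (classic (In z l)).
     * rewrite !indR_t; auto. ring.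
     * rewrite !indR_f; try tauto. ring. Qed.
Lemma lsum_ind_eq1 {V} (l : list V) z : NoDup l ->
  lsum l (fun w => indR (w = z)) = indR (In z l).
Proof. intro H. rewrite <- (Rmult_1_r (indR (In z l))).
 rewrite <- (lsum_ind_eq l z (fun _ => 1)) by auto. apply lsum_ext; intros; ring. Qed.

Lemma inter_sym {V} (l1 l2 : list V) : NoDup l1 -> NoDup l2 ->
  lsum l1 (fun z => indR (In z l2)) = lsum l2 (fun z => indR (In z l1)).
Proof. intros H1 H2.
 transitivity (lsum l1 (fun z => lsum l2 (fun w => indR (w = z)))).
 { apply lsum_ext; intros; rewrite lsum_ind_eq1; auto. }
 rewrite lsum_swap. apply lsum_ext; intros.
 rewrite <- lsum_ind_eq1 by auto. apply lsum_ext; intros; apply indR_sym. Qed.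

Section G.
Context {V : Type} (nbr : V -> list V).

Lemma Gamma_eq (f g : V -> R) v :
  Gamma nbr f g v = / 2 * lsum (nbr v) (fun w => (f w - f v) * (g w - g v)).
Proof. unfold Gamma, Lap. f_equal. induction (nbr v); simpl; [ring|].
 rewrite <- IHl. ring. Qed.

Lemma Lap_ext (h1 h2 : V -> R) v : (forall w, h1 w = h2 w) -> Lap nbr h1 v = Lap nbr h2 v.
Proof. intro H; unfold Lap; apply lsum_ext; intros; rewrite !H; auto. Qed.

Lemma Gamma_ext (f1 f2 g1 g2 : V -> R) v : (forall w, f1 w = f2 w) -> (forall w, g1 w = g2 w) ->
  Gamma nbr f1 g1 v = Gamma nbr f2 g2 v.
Proof. intros H1 H2; rewrite !Gamma_eq; f_equal; apply lsum_ext; intros; rewrite !H1, !H2; auto. Qed.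

Lemma Gamma_sym (f g : V -> R) v : Gamma nbr f g v = Gamma nbr g f v.
Proof. rewrite !Gamma_eq; f_equal; apply lsum_ext; intros; ring. Qed.

Lemma Gamma_nonneg (f : V -> R) v : 0 <= Gamma nbr f f v.
Proof. rewrite Gamma_eq. apply Rmult_le_pos; [lra|]. apply lsum_nonneg; intros.
 apply Rle_0_sqr. Qed.

Lemma Gamma_bil (f1 g1 f2 g2 : V -> R) t s v :
  Gamma nbr (fun z => f1 z + t * g1 z) (fun z => f2 z + s * g2 z) v =
  Gamma nbr f1 f2 v + s * Gamma nbr f1 g2 v + t * Gamma nbr g1 f2 v + t * s * Gamma nbr g1 g2 v.
Proof. rewrite !Gamma_eq.
 rewrite (lsum_ext _ _ (fun w => ((f1 w - f1 v) + t*(g1 w - g1 v)) * ((f2 w - f2 v) + s*(g2 w - g2 v))))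
   by (intros; ring).
 rewrite lsum_bil. ring. Qed.

Lemma Lap_lin (f g : V -> R) t v : Lap nbr (fun z => f z + t * g z) v = Lap nbr f v + t * Lap nbr g v.
Proof. unfold Lap.
 rewrite (lsum_ext _ _ (fun w => (f w - f v) + t * (g w - g v))) by (intros; ring).
 rewrite lsum_add, lsum_scal. auto. Qed.

Lemma Gamma2_expand (f g : V -> R) t x :
  Gamma2 nbr (fun z => f z + t * g z) (fun z => f z + t * g z) x =
  Gamma2 nbr f f x + 2 * t * Gamma2 nbr f g x + t * t * Gamma2 nbr g g x.
Proof.
 unfold Gamma2.
 rewrite (Lap_ext _ (fun v => (Gamma nbr f f v + t * (Gamma nbr f g v + Gamma nbr g f v)) + (t*t) * Gamma nbr g g v))
   by (intros; rewrite Gamma_bil; ring).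
 rewrite Lap_lin, Lap_lin.
 rewrite (Lap_ext (fun v => Gamma nbr f g v + Gamma nbr g f v) (fun v => Gamma nbr f g v + 1 * Gamma nbr g f v))
   by (intros; ring).
 rewrite Lap_lin.
 rewrite (Lap_ext (Gamma nbr g f) (Gamma nbr f g)) by (intros; apply Gamma_sym).
 rewrite (Gamma_ext _ (fun z => f z + t * g z) _ (fun z => Lap nbr f z + t * Lap nbr g z))
   by (intros; auto; apply Lap_lin).
 rewrite Gamma_bil. ring.
Qed.
End G.

Section C.
Context {V : Type} (nbr : V -> list V) (D : nat).
Hypothesis HG : simple_graph nbr.
Hypothesis HR : regular nbr D.

Definition f0 (x v : V) : R :=
  if excluded_middle_informative (v = x) then 0
  else if excluded_middle_informative (In v (nbr x)) then 1 else 2.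
Definition mm (x y : V) : R := lsum (nbr y) (fun z => indR (In z (nbr x))).
Definition SS (x : V) : R := lsum (nbr x) (fun y => mm x y).

Lemma nd v : NoDup (nbr v). Proof. apply HG. Qed.
Lemma irr v : ~ In v (nbr v). Proof. apply HG. Qed.
Lemma sym v w : In w (nbr v) -> In v (nbr w). Proof. apply HG. Qed.
Lemma len v : INR (length (nbr v)) = INR D. Proof. rewrite HR; auto. Qed.

Lemma f0_x x : f0 x x = 0.
Proof. unfold f0; destruct (excluded_middle_informative (x = x)); tauto. Qed.
Lemma f0_N x y : In y (nbr x) -> f0 x y = 1.
Proof. intro H. unfold f0. destruct (excluded_middle_informative (y = x)).
 subst; exfalso; eapply irr; eauto.
 destruct (excluded_middle_informative (In y (nbr x))); tauto. Qed.
Lemma f0_m1 x z : f0 x z - 1 = 1 - indR (In z (nbr x)) - 2 * indR (z = x).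
Proof. unfold f0. destruct (excluded_middle_informative (z = x)).
 - subst. rewrite indR_f by apply irr. rewrite indR_t; auto; ring.
 - rewrite (indR_f (z = x)) by auto.
   destruct (excluded_middle_informative (In z (nbr x))).
   + rewrite indR_t; auto; ring.
   + rewrite indR_f; auto; ring. Qed.
Lemma f0_sq x z : (f0 x z - 1) * (f0 x z - 1) = 1 - indR (In z (nbr x)).
Proof. unfold f0. destruct (excluded_middle_informative (z = x)).
 - subst. rewrite indR_f by apply irr. ring.
 - destruct (excluded_middle_informative (In z (nbr x))).
   + rewrite indR_t; auto; ring.
   + rewrite indR_f; auto; ring. Qed.

Lemma Lap_f0_N x y : In y (nbr x) -> Lap nbr (f0 x) y = INR D - mm x y - 2.
Proof. intro H. unfold Lap. rewrite (f0_N x y H).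
 rewrite (lsum_ext _ _ (fun z => 1 - indR (In z (nbr x)) - 2 * indR (z = x))) by (intros; apply f0_m1).
 rewrite !lsum_sub, lsum_const, lsum_scal, lsum_ind_eq1 by apply nd.
 rewrite indR_t by (apply sym; auto). rewrite len. unfold mm. ring. Qed.

Lemma Gf0_N x y : In y (nbr x) -> Gamma nbr (f0 x) (f0 x) y = /2 * (INR D - mm x y).
Proof. intro H. rewrite Gamma_eq. rewrite (f0_N x y H). f_equal.
 rewrite (lsum_ext _ _ (fun z => 1 - indR (In z (nbr x)))) by (intros; apply f0_sq).
 rewrite lsum_sub, lsum_const, len. unfold mm; ring. Qed.

Lemma Gf0_x x : Gamma nbr (f0 x) (f0 x) x = INR D / 2.
Proof. rewrite Gamma_eq, f0_x.
 rewrite (lsum_ext _ _ (fun z => 1)) by (intros; rewrite f0_N; auto; ring).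
 rewrite lsum_const, len. field. Qed.

Lemma Lap_f0_x x : Lap nbr (f0 x) x = INR D.
Proof. unfold Lap. rewrite f0_x.
 rewrite (lsum_ext _ _ (fun z => 1)) by (intros; rewrite f0_N; auto; ring).
 rewrite lsum_const, len. ring. Qed.

Lemma LapGf0_x x : Lap nbr (Gamma nbr (f0 x) (f0 x)) x = - / 2 * SS x.
Proof. unfold Lap. rewrite Gf0_x.
 rewrite (lsum_ext _ _ (fun y => -/2 * mm x y)) by (intros; rewrite Gf0_N; auto; field).
 rewrite lsum_scal; auto. Qed.

Lemma Gf0Lf0_x x : Gamma nbr (f0 x) (Lap nbr (f0 x)) x = / 2 * (- SS x - 2 * INR D).
Proof. rewrite Gamma_eq, f0_x, Lap_f0_x. f_equal.
 rewrite (lsum_ext _ _ (fun y => -1 * mm x y - 2)) by (intros; rewrite f0_N, Lap_f0_N; auto; ring).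
 rewrite lsum_sub, lsum_const, lsum_scal, len. unfold SS; change (fun y => mm x y) with (mm x); ring. Qed.

Lemma G2f0 x : Gamma2 nbr (f0 x) (f0 x) x = SS x / 4 + INR D.
Proof. unfold Gamma2. rewrite LapGf0_x, Gf0Lf0_x. field. Qed.

Definition gg (y0 v : V) : R := indR (v = y0).

Lemma ne_of_in x y : In y (nbr x) -> y <> x.
Proof. intros H ->. eapply irr; eauto. Qed.

Lemma Gf0g_x x y0 : In y0 (nbr x) -> Gamma nbr (f0 x) (gg y0) x = / 2.
Proof. intro H. rewrite Gamma_eq, f0_x. unfold gg at 2.
 rewrite (indR_f (x = y0)) by (intro E; subst; eapply irr; eauto).
 rewrite (lsum_ext _ _ (fun w => indR (w = y0))) by (intros; rewrite f0_N; auto; unfold gg; ring).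
 rewrite lsum_ind_eq1 by apply nd. rewrite indR_t; auto; ring. Qed.

Lemma Gf0g_N x y0 y : In y0 (nbr x) -> In y (nbr x) ->
  Gamma nbr (f0 x) (gg y0) y = indR (y = y0) * (- / 2 * (INR D - mm x y - 2)).
Proof. intros H0 H. rewrite Gamma_eq, (f0_N x y H). unfold gg at 2.
 destruct (classic (y = y0)).
 - subst. rewrite (indR_t (y0 = y0)) by auto.
   rewrite (lsum_ext _ _ (fun z => -1 * (f0 x z - f0 x y0))).
   2:{ intros z Hz. unfold gg. rewrite indR_f, (f0_N x y0 H0). ring. intro E; subst. eapply irr; eauto. }
   rewrite lsum_scal. rewrite <- (Lap_f0_N x y0 H0). unfold Lap. rewrite (f0_N x y0 H0). ring.
 - rewrite (indR_f (y = y0)) by auto.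
   rewrite (lsum_ext _ _ (fun z => 0)).
   2:{ intros z Hz. unfold gg. destruct (classic (z = y0)).
       + subst. rewrite f0_N; auto; ring.
       + rewrite indR_f; auto; ring. }
   rewrite lsum_const. ring. Qed.

Lemma LapGf0g_x x y0 : In y0 (nbr x) ->
  Lap nbr (Gamma nbr (f0 x) (gg y0)) x = - / 2 * (INR D - mm x y0 - 2) - INR D / 2.
Proof. intro H0. unfold Lap. rewrite Gf0g_x by auto.
 rewrite (lsum_ext _ _ (fun y => indR (y = y0) * (- / 2 * (INR D - mm x y - 2)) - / 2))
   by (intros; rewrite Gf0g_N; auto).
 rewrite lsum_sub, lsum_const, len.
 rewrite (lsum_ind_eq _ _ (fun y => - / 2 * (INR D - mm x y - 2))) by apply nd.
 rewrite indR_t by auto. field. Qed.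

Lemma Lapg_N x y0 y : In y (nbr x) ->
  Lap nbr (gg y0) y = indR (In y0 (nbr y)) - INR D * indR (y = y0).
Proof. intro H. unfold Lap, gg. rewrite lsum_sub, lsum_ind_eq1 by apply nd.
 rewrite lsum_const, len. auto. Qed.

Lemma Lapg_x x y0 : In y0 (nbr x) -> Lap nbr (gg y0) x = 1.
Proof. intro H. unfold Lap, gg.
 rewrite (indR_f (x = y0)) by (intro E; subst; eapply irr; eauto).
 rewrite (lsum_ext _ _ (fun w => indR (w = y0))) by (intros; ring).
 rewrite lsum_ind_eq1 by apply nd. apply indR_t; auto. Qed.

Lemma Gf0Lg_x x y0 : In y0 (nbr x) ->
  Gamma nbr (f0 x) (Lap nbr (gg y0)) x = / 2 * (mm x y0 - 2 * INR D).
Proof. intro H. rewrite Gamma_eq, f0_x, Lapg_x by auto. f_equal.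
 rewrite (lsum_ext _ _ (fun w => indR (In w (nbr y0)) - INR D * indR (w = y0) - 1)).
 2:{ intros w Hw. rewrite (f0_N x w Hw), (Lapg_N x y0 w Hw).
     assert (E : indR (In y0 (nbr w)) = indR (In w (nbr y0))).
     { destruct (classic (In y0 (nbr w))).
       - rewrite !indR_t; auto. apply sym; auto.
       - rewrite !indR_f; auto. intro E; apply H0, sym; auto. }
     rewrite E. ring. }
 rewrite !lsum_sub, lsum_scal, lsum_ind_eq1, lsum_const, len by apply nd.
 rewrite (indR_t (In y0 (nbr x))) by auto.
 unfold mm. rewrite inter_sym by apply nd. ring. Qed.

Lemma GgLf0_x x y0 : In y0 (nbr x) ->
  Gamma nbr (gg y0) (Lap nbr (f0 x)) x = / 2 * (- mm x y0 - 2).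
Proof. intro H. rewrite Gamma_eq, Lap_f0_x. unfold gg at 2.
 rewrite (indR_f (x = y0)) by (intro E; subst; eapply irr; eauto). f_equal.
 rewrite (lsum_ext _ _ (fun w => indR (w = y0) * (- mm x w - 2))).
 2:{ intros w Hw. unfold gg. rewrite Lap_f0_N by auto. ring. }
 rewrite lsum_ind_eq by apply nd. rewrite indR_t; auto. ring. Qed.

Lemma G2f0g x y0 : In y0 (nbr x) -> Gamma2 nbr (f0 x) (gg y0) x = 1 + mm x y0 / 4.
Proof. intro H. unfold Gamma2. rewrite LapGf0g_x, Gf0Lg_x, GgLf0_x by auto. field. Qed.

Lemma tri_SS x : triangles nbr x = SS x / 2.
Proof. unfold triangles, SS. unfold Rdiv. rewrite Rmult_comm. f_equal.
 apply lsum_ext; intros y Hy. unfold mm.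
 change (lsum (nbr x) (fun z => indR (In z (nbr y))) = lsum (nbr y) (fun z => indR (In z (nbr x)))).
 apply inter_sym; apply nd. Qed.
End C.

Lemma sharp_ineq {V} (nbr : V -> list V) x K : BE_curvature nbr x K ->
  forall f, Gamma2 nbr f f x >= K * Gamma nbr f f x.
Proof. intros [Hub Hl] f.
 destruct (Rlt_or_le (Gamma2 nbr f f x) (K * Gamma nbr f f x)) as [Hlt|]; [|lra].
 exfalso. pose proof (Gamma_nonneg nbr f x) as Hg.
 destruct (Rle_lt_or_eq_dec _ _ Hg) as [Hp|He].
 - assert (K <= Gamma2 nbr f f x / Gamma nbr f f x).
   { apply Hl. intros K' HK'. specialize (HK' f).
     apply (Rmult_le_reg_r (Gamma nbr f f x)); auto. unfold Rdiv.
     rewrite Rmult_assoc, Rinv_l by lra. lra. }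
   apply (Rmult_le_compat_r (Gamma nbr f f x)) in H; [|lra].
   unfold Rdiv in H. rewrite Rmult_assoc, Rinv_l in H by lra. lra.
 - assert (K <= K - 1).
   { apply Hl. intros K' HK'. specialize (HK' f). rewrite <- He in *. lra. }
   lra.
Qed.

Lemma poly0 b c : (forall t, b * t + c * t * t >= 0) -> b = 0.
Proof. intro H. destruct (Req_dec b 0) as [|Hb]; auto. exfalso.
 set (k := 2 * (Rabs c + 1)).
 assert (Hk : k > 0) by (unfold k; pose proof (Rabs_pos c); lra).
 specialize (H (- b / k)).
 replace (b * (- b / k) + c * (- b / k) * (- b / k)) with ((b * b) / (k * k) * (c - k)) in H
   by (field; lra).
 assert (0 < b * b / (k * k)).
 { unfold Rdiv. apply Rmult_lt_0_compat. nra. apply Rinv_0_lt_compat. nra. }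
 assert (c - k < 0) by (unfold k; pose proof (Rle_abs c); pose proof (Rabs_pos c); lra).
 nra.
Qed.

Lemma local_eq {V} (nbr : V -> list V) D x y0 :
  simple_graph nbr -> regular nbr D -> curvature_sharp nbr D x -> In y0 (nbr x) ->
  INR D * mm nbr x y0 = SS nbr x.
Proof. intros HG HR Hs H0.
 assert (Hd : INR D > 0).
 { rewrite <- (HR x). apply lt_0_INR. destruct (nbr x); simpl in *; [tauto|lia]. }
 pose proof (sharp_ineq _ _ _ Hs) as Hq.
 set (K0 := 2 + triangles nbr x / INR D) in *.
 assert (HK : K0 = 2 + SS nbr x / 2 / INR D) by (unfold K0; rewrite (tri_SS nbr HG); auto).
 assert (E0 : K0 * (INR D / 2) = SS nbr x / 4 + INR D) by (rewrite HK; field; lra).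
 assert (Hb : 2 * (1 + mm nbr x y0 / 4) - K0 * (/2 + /2) = 0).
 { apply poly0 with (c := Gamma2 nbr (gg y0) (gg y0) x - K0 * Gamma nbr (gg y0) (gg y0) x).
   intro t. specialize (Hq (fun z => f0 nbr x z + t * gg y0 z)).
   rewrite Gamma2_expand, Gamma_bil in Hq.
   rewrite (Gamma_sym _ (gg y0) (f0 nbr x)) in Hq.
   rewrite (G2f0 nbr D HG HR), (G2f0g nbr D HG HR), (Gf0_x nbr D HG HR), (Gf0g_x nbr HG) in Hq by auto.
   set (A := Gamma2 nbr (gg y0) (gg y0) x) in *.
   set (B := Gamma nbr (gg y0) (gg y0) x) in *.
   set (m := mm nbr x y0) in *.
   assert (Hexp : SS nbr x / 4 + INR D + 2 * t * (1 + m / 4) + t * t * A -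
     K0 * (INR D / 2 + t * / 2 + t * / 2 + t * t * B) =
     (2 * (1 + m / 4) - K0 * (/ 2 + / 2)) * t + (A - K0 * B) * t * t
     + (SS nbr x / 4 + INR D - K0 * (INR D / 2))) by ring.
   lra. }
 rewrite HK in Hb.
 apply Rminus_diag_uniq.
 replace (INR D * mm nbr x y0 - SS nbr x) with (2 * INR D * (2 * (1 + mm nbr x y0 / 4) - (2 + SS nbr x / 2 / INR D) * (/ 2 + / 2))) by (field; lra).
 rewrite Hb. ring.
Qed.

Lemma edge_eq {V} (nbr : V -> list V) D x y :
  simple_graph nbr -> regular nbr D -> (forall x, curvature_sharp nbr D x) ->
  adj nbr x y -> triangles nbr x = triangles nbr y.
Proof. intros HG HR Hs Hxy. unfold adj in Hxy.
 assert (Hyx : In x (nbr y)) by (apply HG; auto).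
 pose proof (local_eq nbr D x y HG HR (Hs x) Hxy) as E1.
 pose proof (local_eq nbr D y x HG HR (Hs y) Hyx) as E2.
 assert (Em : mm nbr x y = mm nbr y x).
 { unfold mm. apply inter_sym; apply HG. }
 rewrite (tri_SS nbr HG x), (tri_SS nbr HG y). rewrite <- E1, <- E2, Em. auto.
Qed.

Theorem mainTheorem3 (V : Type) (nbr : V -> list V) (D : nat) :
  simple_graph nbr -> regular nbr D -> connected nbr ->
  (forall x, curvature_sharp nbr D x) ->
  exists K : R, forall x, BE_curvature nbr x K.
Proof.
 intros HG HR Hc Hs.
 destruct (classic (exists x0 : V, True)) as [[x0 _]|Hn].
 - exists (2 + triangles nbr x0 / INR D). intro x.
   assert (E : triangles nbr x0 = triangles nbr x).
   { induction (Hc x0 x) as [a b Hab| a | a b c _ IH1 _ IH2].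
     - eapply edge_eq; eauto.
     - auto.
     - congruence. }
   rewrite E. apply Hs.
 - exists 0. intro x. exfalso. apply Hn. exists x; auto.
Qed.
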